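(* For every $n\geq1$, the number of $\mathcal{B}_n$-orbits of acute $0/1$-triangles in $[0,1]^n$ equals $$\left\lfloor\frac{2n^3+3n^2-6n+9}{72}\right\rfloor.$$
   Context: A $0/1$-triangle in $[0,1]^n$ is the convex hull of three distinct points of $\{0,1\}^n$; it is acute if all three of its angles are strictly less than $\pi/2$. $\mathcal{B}_n$ is the hyperoctahedral group of symmetries of $[0,1]^n$ (acting on $\{0,1\}^n$ by coordinate permutations combined with complementation of a subset of coordinates); two triangles are counted as the same if one is mapped onto the other by an element of $\mathcal{B}_n$. *)

(* Defs.v *)
From mathcomp Require Import all_boot all_order all_algebra all_fingroup.
Set Implicit Arguments. Unset Strict Implicit. Unset Printing Implicit Defensive.
Import GRing.Theory Num.Theory.

Definition pt (n : nat) := {ffun 'I_n -> bool}.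

(* Inner product <u - v, w - v> (integer valued), i.e. the cosine numerator
   of the angle at vertex v of the triangle u v w. *)
Definition edge_dot n (u v w : pt n) : int :=
  (\sum_(i < n) ((u i)%:Z - (v i)%:Z) * ((w i)%:Z - (v i)%:Z))%R.

(* A 0/1-triangle: convex hull of three distinct points of {0,1}^n,
   represented by its vertex set (three-element subset of {0,1}^n). *)
Definition triangle01 n (T : {set pt n}) : bool := #|T| == 3.

(* Acute: each angle is < pi/2, i.e. at every vertex v with the other two
   vertices u, w, the inner product <u - v, w - v> is positive. *)
Definition acute01 n (T : {set pt n}) : bool :=
  triangle01 T &&
  [forall u in T, forall v in T, forall w in T,
     [&& u != v, w != v & u != w] ==> (0 < edge_dot u v w)%R].

(* Hyperoctahedral group B_n: coordinate permutation s combined with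
   complementation of the coordinates in c. *)
Definition bact n (s : 'S_n) (c : {ffun 'I_n -> bool}) (x : pt n) : pt n :=
  [ffun i => x (s i) (+) c i].

Definition bimage n (s : 'S_n) (c : {ffun 'I_n -> bool}) (T : {set pt n})
  : {set pt n} := [set bact s c x | x in T].

Definition borbit n (T : {set pt n}) : {set {set pt n}} :=
  [set bimage s c T | s : 'S_n, c : {ffun 'I_n -> bool}].

Definition num_acute_orbits n : nat :=
  #|[set borbit T | T in [set T : {set pt n} | acute01 T]]|.

(* Main.v *)
Require Import Defs.
From mathcomp Require Import all_boot all_order all_algebra all_fingroup.
From mathcomp Require Import zify.
Set Implicit Arguments. Unset Strict Implicit. Unset Printing Implicit Defensive.

Definition Ff (x : nat) : nat := x.+1 ^ 2 - ~~ odd x.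
Definition Dd (n : nat) : nat := \sum_(a < n.+1) (0 < a) * Ff (n.+1 - 3 * a).
Definition ee (r : nat) : nat := nth 0 [:: 9; 8; 25; 0; 17; 16] r.

Lemma sum_cint K b a n :
  \sum_(c < K) ((b <= c) && (a + b + c <= n)) = minn K (n.+1 - a - b) - b.
Proof.
elim: K => [|K IH]; first by rewrite big_ord0 min0n.
rewrite big_ord_recr /= IH.
case: leqP => h1; case: leqP => h2 /=; lia.
Qed.

Lemma shiftsum a K (h : nat -> nat) : a <= K ->
  \sum_(b < K) (a <= b) * h b = \sum_(q < K - a) h (a + q).
Proof.
elim: a K h => [|a IH] K h aK.
  by rewrite subn0; apply: eq_bigr => i _; rewrite mul1n.
case: K aK => [|K] //= aK.
rewrite big_ord_recl /= mul0n add0n.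
by rewrite (IH K (fun b => h b.+1)) // subSS.
Qed.

Lemma sumG x K : x <= K -> 4 * \sum_(q < K) (x - 2 * q) = Ff x.
Proof.
elim: x {-2}x (leqnn x) K => [|m IH] x hx K xK.
  move: hx; rewrite leqn0 => /eqP->.
  rewrite big1 ?muln0 // => i _; by rewrite sub0n.
case: x hx xK => [|[|x]] hx xK.
- by rewrite big1 ?muln0 // => i _; rewrite sub0n.
- case: K xK => [|K] // _. rewrite big_ord_recl big1 ?muln0 /Ff //= => i _.
- case: K xK => [|K] // xK. rewrite big_ord_recl /=.
  have -> : \sum_(i < K) (x.+2 - 2 * (bump 0 i)) = \sum_(i < K) (x - 2 * i).
    by apply: eq_bigr => i _; rewrite /bump /=; lia.
  rewrite mulnDr IH; [|lia|lia].
  rewrite /Ff /=; case: (odd x) => /=; nia.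
Qed.

Lemma Dd3 n : Dd n.+3 = Ff n.+1 + Dd n.
Proof.
rewrite /Dd big_ord_recl /= mul0n add0n.
rewrite (eq_bigr (fun i : 'I_n.+3 => Ff (n.+1 - 3 * i))); last first.
  by move=> i _; rewrite mul1n /bump /=; congr Ff; lia.
rewrite big_ord_recl muln0 subn0; congr (_ + _).
rewrite [RHS]big_ord_recl /= mul0n add0n.
rewrite !big_ord_recr /= /bump /=.
have -> : n.+1 - 3 * (1 + n.+1) = 0 by lia.
have -> : n.+1 - 3 * (1 + n) = 0 by lia.
rewrite /Ff /= !addn0.
by apply: eq_bigr => i _; rewrite mul1n.
Qed.

Lemma Dd6 n : Dd n.+3.+3 = Dd n + (2 * n ^ 2 + 14 * n + 28).
Proof.
rewrite Dd3 Dd3 /Ff /= !negbK.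
case: (odd n) => /=; lia.
Qed.

Lemma Dd_small : (Dd 0 = 0 /\ Dd 1 = 0 /\ Dd 2 = 0) /\ (Dd 3 = 4 /\ Dd 4 = 8 /\ Dd 5 = 16).
Proof. by do !split; rewrite /Dd !big_ord_recr big_ord0. Qed.

Lemma main_arith n : 2 * n ^ 3 + 3 * n ^ 2 + 9 = 18 * Dd n + 6 * n + ee (n %% 6).
Proof.
elim: n {-2}n (leqnn n) => [|m IH] n hn.
  by move: hn; rewrite leqn0 => /eqP->; case: Dd_small => [[-> _] _].
case: (ltnP n 6) => h6.
  case: Dd_small => [[D0 [D1 D2]] [D3 [D4 D5]]].
  by move: hn h6; case: n => [|[|[|[|[|[|n]]]]]] _ h6; rewrite ?D0 ?D1 ?D2 ?D3 ?D4 ?D5.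
have [k Ek] : exists k, n = k + 6 by exists (n - 6); lia.
subst n.
rewrite modnDr (_ : k + 6 = k.+3.+3) ?Dd6; last by lia.
have := IH k ltac:(lia).
lia.
Qed.

Definition Sset n : {set ('I_n.+1 * 'I_n.+1) * 'I_n.+1} :=
  [set t : ('I_n.+1 * 'I_n.+1) * 'I_n.+1 | [&& 0 < t.1.1, t.1.1 <= t.1.2, t.1.2 <= t.2 & t.1.1 + t.1.2 + t.2 <= n]].

Lemma cardS n : 4 * #|Sset n| = Dd n.
Proof.
rewrite -sum1_card.
rewrite (eq_bigl (fun t : ('I_n.+1 * 'I_n.+1) * 'I_n.+1 => [&& 0 < t.1.1, t.1.1 <= t.1.2, t.1.2 <= t.2 & t.1.1 + t.1.2 + t.2 <= n]));
  last by move=> t; rewrite inE.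
rewrite big_mkcond /=.
rewrite -(pair_big xpredT xpredT (fun (p : 'I_n.+1 * 'I_n.+1) (c : 'I_n.+1) => if [&& 0 < p.1, p.1 <= p.2, p.2 <= c & p.1 + p.2 + c <= n] then 1 else 0)) /=.
rewrite -(pair_big xpredT xpredT (fun a b : 'I_n.+1 => \sum_(c < n.+1) if [&& 0 < a, a <= b, b <= c & a + b + c <= n] then 1 else 0)) /=.
rewrite /Dd big_distrr /=; apply: eq_bigr => a _.
have E : forall b : 'I_n.+1, \sum_(c < n.+1) (if [&& 0 < a, a <= b, b <= c & a + b + c <= n] then 1 else 0)
   = (0 < a) * ((a <= b) * (n.+1 - a - b - b)).
  move=> b.
  have -> : n.+1 - a - b - b = \sum_(c < n.+1) ((b <= c) && (a + b + c <= n)).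
    by rewrite sum_cint; lia.
  case: (0 < a); case: (a <= (b : nat)) => /=; rewrite ?mul0n ?mul1n.
  - by apply: eq_bigr => c _; case: ifP.
  - by rewrite big1 // => c _.
  - by rewrite big1 // => c _.
  - by rewrite big1 // => c _.
rewrite (eq_bigr _ (fun b _ => E b)) -big_distrr /= mulnCA; congr (_ * _).
rewrite (shiftsum (fun b => n.+1 - a - b - b)); last by apply: ltnW; rewrite ltn_ord.
rewrite -(sumG (x := n.+1 - 3 * a) (K := n.+1 - a)); last by lia.
congr (_ * _); apply: eq_bigr => q _; lia.
Qed.

Lemma perm2 (A : eqType) (b c b' c' : A) : perm_eq [:: b; c] [:: b'; c'] ->
  (b = b' /\ c = c') \/ (b = c' /\ c = b').
Proof.
move=> H; have hb : b \in [:: b'; c'] by rewrite -(perm_mem H) mem_head.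
have one : forall (u v : A), perm_eq [:: u] [:: v] -> u = v.
  by move=> u v /perm_mem h; have := h u; rewrite !inE eqxx => /esym/eqP.
rewrite !inE in hb; case/orP: hb => /eqP e.
  by subst b; left; split=> //; apply: one; rewrite -(perm_cons b').
subst b; right; split=> //; apply: one; rewrite -(perm_cons c').
by apply: (perm_trans H); rewrite perm_sym (perm_catC [:: c'] [:: b']).
Qed.

Lemma perm3 (A : eqType) (a b c a' b' c' : A) : perm_eq [:: a; b; c] [:: a'; b'; c'] ->
  [\/ [/\ a = a', b = b' & c = c'], [/\ a = a', b = c' & c = b'] |
       [\/ [/\ a = b', b = a' & c = c'], [/\ a = b', b = c' & c = a'],
       [/\ a = c', b = a' & c = b'] | [/\ a = c', b = b' & c = a']]].
Proof.
move=> H; have ha : a \in [:: a'; b'; c'] by rewrite -(perm_mem H) mem_head.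
rewrite !inE in ha; case/or3P: ha => /eqP e; subst a.
- by move: H; rewrite perm_cons => /perm2 [[-> ->]|[-> ->]]; [apply: Or31|apply: Or32].
- have H' : perm_eq [:: b'; b; c] [:: b'; a'; c'].
    apply: (perm_trans H); by rewrite perm_sym (perm_catCA [:: b'] [:: a'] [:: c']).
  move: H'; rewrite perm_cons => /perm2 [[-> ->]|[-> ->]]; apply: Or33; [apply: Or41|apply: Or42]; by split.
- have H' : perm_eq [:: c'; b; c] [:: c'; a'; b'].
    apply: (perm_trans H); by rewrite perm_sym (perm_rot 2 [:: a'; b'; c']).
  move: H'; rewrite perm_cons => /perm2 [[-> ->]|[-> ->]]; apply: Or33; [apply: Or43|apply: Or44]; by split.
Qed.

Lemma sum_interval m l h : \sum_(i < m) ((l <= i) && (i < h)) = minn m h - l.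
Proof.
elim: m => [|m IH]; first by rewrite big_ord0 min0n.
rewrite big_ord_recr /= IH; case: leqP => h1; case: leqP => h2 /=; lia.
Qed.

Section Geo.
Variable n : nat.
Implicit Types (x y z u v w : pt n) (T : {set pt n}) (s : 'S_n) (c : {ffun 'I_n -> bool}).

Definition D3 x y z : nat := \sum_(i < n) ((y i != x i) && (z i != x i)).
Definition dotT T v : nat := \sum_(i < n) [forall u in T, (u != v) ==> (u i != v i)].
Definition key T : seq nat := sort leq (map (dotT T) (enum T)).

Lemma edge_dotE u v w : edge_dot u v w = Posz (D3 v u w).
Proof.
rewrite /edge_dot /D3 (big_morph Posz PoszD erefl).
by apply: eq_bigr => i _; case: (u i); case: (v i); case: (w i).
Qed.

Lemma D3C x y z : D3 x y z = D3 x z y.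
Proof. by apply: eq_bigr => i _; rewrite andbC. Qed.

Lemma D3_neq x y z : 0 < D3 x y z -> (y != x) && (z != x).
Proof.
case: eqP => [->|_]; first by rewrite /D3 big1 // => i _; rewrite eqxx.
case: eqP => [->|_] //; by rewrite /D3 big1 // => i _; rewrite eqxx andbF.
Qed.

Lemma D3_sum x y z : D3 x y z + D3 y x z + D3 z x y <= n.
Proof.
rewrite /D3 -!big_split /=.
apply: leq_trans (_ : \sum_(i < n) 1 <= n); last by rewrite sum1_card card_ord.
by apply: leq_sum => i _; case: (x i); case: (y i); case: (z i).
Qed.

Lemma dotT_set3 x y z : y != x -> z != x -> dotT [set x; y; z] x = D3 x y z.
Proof.
move=> yx zx; apply: eq_bigr => i _.
congr (nat_of_bool _); apply/forall_inP/idP.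
  move=> H; have := H y; have := H z; rewrite !inE !eqxx !orbT yx zx /=.
  by move=> -> // ->.
move=> /andP [h1 h2] u; rewrite !inE => /orP [/orP [] /eqP ->|/eqP ->] //=; rewrite ?eqxx //=.
  by rewrite h1 implybT.
  by rewrite h2 implybT.
Qed.

Lemma set3C1 x y z : [set x; y; z] = [set y; x; z].
Proof. by apply/setP => q; rewrite !inE; case: (q == x); case: (q == y); case: (q == z). Qed.
Lemma set3C2 x y z : [set x; y; z] = [set x; z; y].
Proof. by apply/setP => q; rewrite !inE; case: (q == x); case: (q == y); case: (q == z). Qed.

Lemma card_set3 x y z : y != x -> z != x -> z != y -> #|[set x; y; z]| = 3.
Proof.
move=> yx zx zy.
have -> : [set x; y; z] = x |: [set y; z].
  by apply/setP => q; rewrite !inE; case: (q == x); case: (q == y); case: (q == z).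
rewrite cardsU1 cards2 !inE.
by rewrite negb_or !(eq_sym x) yx zx (eq_sym y) zy.
Qed.

Lemma count_sum (A : Type) (P : pred A) (l : seq A) : count P l = \sum_(i <- l) P i.
Proof. by elim: l => [|a l IH]; rewrite ?big_nil ?big_cons //= IH. Qed.


Definition cinv (s : 'S_n) (c : {ffun 'I_n -> bool}) : {ffun 'I_n -> bool} := [ffun i => c (s^-1%g i)].
Definition ccomp (s' : 'S_n) (c c' : {ffun 'I_n -> bool}) : {ffun 'I_n -> bool} := [ffun i => c (s' i) (+) c' i].

Lemma bact_comp s c s' c' x : bact s' c' (bact s c x) = bact (s' * s)%g (ccomp s' c c') x.
Proof. by apply/ffunP => i; rewrite !ffunE permM addbA. Qed.

Lemma bact_inv s c x : bact (s^-1)%g (cinv s c) (bact s c x) = x.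
Proof. by apply/ffunP => i; rewrite !ffunE permKV -addbA addbb addbF. Qed.

Lemma bact_inj s c : injective (bact s c).
Proof. by move=> x y e; rewrite -(bact_inv s c x) e bact_inv. Qed.

Lemma bact1 x : bact 1%g [ffun => false] x = x.
Proof. by apply/ffunP => i; rewrite !ffunE perm1 addbF. Qed.

Lemma bimage_comp s c s' c' T : bimage s' c' (bimage s c T) = bimage (s' * s)%g (ccomp s' c c') T.
Proof.
rewrite /bimage -imset_comp; apply: eq_imset => x /=; by rewrite bact_comp.
Qed.

Lemma bimage_inv s c T : bimage (s^-1)%g (cinv s c) (bimage s c T) = T.
Proof.
rewrite /bimage -imset_comp (eq_imset (g := id)) ?imset_id // => x /=; by rewrite bact_inv.
Qed.

Lemma bimage1 T : bimage 1%g [ffun => false] T = T.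
Proof. by rewrite /bimage (eq_imset (g := id)) ?imset_id // => x /=; rewrite bact1. Qed.

Lemma mem_borbit T T' : T' \in borbit T -> exists s c, T' = bimage s c T.
Proof. by move=> /imset2P [s c _ _ ->]; exists s, c. Qed.

Lemma in_borbit T s c : bimage s c T \in borbit T.
Proof. by apply/imset2P; exists s c. Qed.

Lemma borbit_refl T : T \in borbit T.
Proof. by rewrite -{1}(bimage1 T) in_borbit. Qed.

Lemma borbit_eq T T' : T' \in borbit T -> borbit T' = borbit T.
Proof.
move=> /mem_borbit [s [c ->]]; apply/setP => U; apply/idP/idP.
  by move=> /mem_borbit [s2 [c2 ->]]; rewrite bimage_comp in_borbit.
move=> /mem_borbit [s2 [c2 ->]].
by rewrite -{1}(bimage_inv s c T) bimage_comp in_borbit.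
Qed.

Lemma xor_neq a b d : (a (+) d != b (+) d) = (a != b).
Proof. by case: a; case: b; case: d. Qed.

Lemma dotT_bact s c T v : dotT (bimage s c T) (bact s c v) = dotT T v.
Proof.
rewrite /dotT [RHS](reindex_inj (@perm_inj _ s)) /=.
apply: eq_bigr => i _; congr (nat_of_bool _).
apply/forall_inP/forall_inP => H u uT.
  have := H (bact s c u) (imset_f _ uT).
  by rewrite (inj_eq (@bact_inj s c)) !ffunE xor_neq.
move/imsetP: uT => [w wT ->].
by rewrite (inj_eq (@bact_inj s c)) !ffunE xor_neq; apply: H.
Qed.

Lemma key_bact s c T : key (bimage s c T) = key T.
Proof.
rewrite /key.
apply/(perm_sortP leq_total leq_trans anti_leq).
have P1 : perm_eq (enum (bimage s c T)) (map (bact s c) (enum T)).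
  apply: uniq_perm.
  - by rewrite enum_uniq.
  - by rewrite map_inj_uniq ?enum_uniq //; apply: bact_inj.
  - move=> q; rewrite mem_enum.
    apply/imsetP/mapP => [[w wT ->]|[w wT ->]]; exists w => //.
      by rewrite mem_enum.
    by rewrite -mem_enum.
apply: (perm_trans (perm_map (dotT (bimage s c T)) P1)).
rewrite -map_comp.
have -> : [seq (dotT (bimage s c T) \o bact s c) i | i <- enum T] = [seq dotT T i | i <- enum T].
  by apply: eq_map => w /=; rewrite dotT_bact.
apply: perm_refl.
Qed.
Lemma key_borbit T T' : T' \in borbit T -> key T' = key T.
Proof. by move=> /mem_borbit [s [c ->]]; apply: key_bact. Qed.

Lemma key_set3 x y z : y != x -> z != x -> z != y ->
  key [set x; y; z] = sort leq [:: D3 x y z; D3 y x z; D3 z x y].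
Proof.
move=> yx zx zy.
have dx : dotT [set x; y; z] x = D3 x y z by rewrite dotT_set3.
have dy : dotT [set x; y; z] y = D3 y x z.
  by rewrite set3C1 dotT_set3 // eq_sym.
have dz : dotT [set x; y; z] z = D3 z x y.
  by rewrite set3C2 set3C1 dotT_set3 // eq_sym.
rewrite /key; apply/(perm_sortP leq_total leq_trans anti_leq).
have P1 : perm_eq (enum [set x; y; z]) [:: x; y; z].
  apply: uniq_perm.
  - by rewrite enum_uniq.
  - by rewrite /= !inE negb_or !(eq_sym x) yx zx (eq_sym y) zy.
  - by move=> q; rewrite mem_enum !inE orbA.
apply: (perm_trans (perm_map (dotT [set x; y; z]) P1)).
rewrite /= dx dy dz; apply: perm_refl.
Qed.

Definition tp x y z (i : 'I_n) : bool * bool := (x i (+) y i, x i (+) z i).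
Definition cnt x y z k : nat := \sum_(i < n) (tp x y z i == k).

Lemma cnt_tt x y z : cnt x y z (true, true) = D3 x y z.
Proof. by apply: eq_bigr => i _; rewrite /tp; case: (x i); case: (y i); case: (z i). Qed.
Lemma cnt_tf x y z : cnt x y z (true, false) = D3 y x z.
Proof. by apply: eq_bigr => i _; rewrite /tp; case: (x i); case: (y i); case: (z i). Qed.
Lemma cnt_ft x y z : cnt x y z (false, true) = D3 z x y.
Proof. by apply: eq_bigr => i _; rewrite /tp; case: (x i); case: (y i); case: (z i). Qed.
Lemma cnt_tot x y z :
  cnt x y z (false, false) + cnt x y z (true, true) + cnt x y z (true, false)
  + cnt x y z (false, true) = n.
Proof.
rewrite /cnt -!big_split /=.
rewrite -[RHS]card_ord -sum1_card; apply: eq_bigr => i _.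
by rewrite /tp; case: (x i); case: (y i); case: (z i).
Qed.

Lemma count_tp x y z k :
  count_mem k [tuple tp x y z i | i < n] = cnt x y z k.
Proof.
rewrite /= count_map count_sum big_enum /cnt.
by apply: eq_bigl => i.
Qed.

Lemma construct x y z x' y' z' :
  D3 x y z = D3 x' y' z' -> D3 y x z = D3 y' x' z' -> D3 z x y = D3 z' x' y' ->
  exists s c, [/\ bact s c x = x', bact s c y = y' & bact s c z = z'].
Proof.
move=> e1 e2 e3.
have ec : forall k, cnt x y z k = cnt x' y' z' k.
  have := cnt_tot x y z; have := cnt_tot x' y' z'.
  rewrite !cnt_tt !cnt_tf !cnt_ft e1 e2 e3 => h1 h2.
  case=> [[] []]; rewrite ?cnt_tt ?cnt_tf ?cnt_ft //.
  move: h1 h2; set a := cnt x y z _; set b := cnt x' y' z' _; set d1 := D3 x' y' z'; set d2 := D3 y' x' z'; set d3 := D3 z' x' y'; lia.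
have : perm_eq [tuple tp x' y' z' i | i < n] [tuple tp x y z i | i < n].
  rewrite /perm_eq; apply/allP => k _ /=.
  by rewrite !count_tp ec.
move/tuple_permP => [p hp].
have tpe : forall i, tp x' y' z' i = tp x y z (p i).
  move=> i; have := congr1 (fun t => nth (false, false) t i) hp.
  by rewrite -!tnth_nth !tnth_mktuple.
exists p, [ffun i => x (p i) (+) x' i].
split; apply/ffunP => i; rewrite !ffunE; have := tpe i; rewrite /tp;
  case=> E1 E2; move: E1 E2;
  case: (x (p i)); case: (y (p i)); case: (z (p i)); case: (x' i); case: (y' i); case: (z' i) => //=.
Qed.

Lemma M3 x y z u v w :
  D3 x y z = D3 u v w -> D3 y x z = D3 v u w -> D3 z x y = D3 w u v ->
  [set u; v; w] \in borbit [set x; y; z].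
Proof.
move=> e1 e2 e3; have [s [c [h1 h2 h3]]] := construct e1 e2 e3.
suff -> : [set u; v; w] = bimage s c [set x; y; z] by apply: in_borbit.
apply/setP => q; rewrite /bimage; apply/idP/imsetP.
  rewrite !inE => /orP [/orP [] /eqP ->|/eqP ->].
  - by exists x; [rewrite !inE eqxx | rewrite h1].
  - by exists y; [rewrite !inE eqxx orbT | rewrite h2].
  - by exists z; [rewrite !inE eqxx orbT | rewrite h3].
move=> [q' hq' ->]; move: hq'; rewrite !inE => /orP [/orP [] /eqP ->|/eqP ->].
- by rewrite h1 eqxx.
- by rewrite h2 eqxx orbT.
- by rewrite h3 eqxx orbT.
Qed.

Lemma key_orbit x y z x' y' z' : y != x -> z != x -> z != y ->
  y' != x' -> z' != x' -> z' != y' ->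
  key [set x; y; z] = key [set x'; y'; z'] -> [set x'; y'; z'] \in borbit [set x; y; z].
Proof.
move=> yx zx zy yx' zx' zy'.
rewrite !key_set3 // => /(perm_sortP leq_total leq_trans anti_leq) /perm3.
have sC : forall a b d : pt n, [set a; b; d] = [set b; a; d] /\ [set a; b; d] = [set a; d; b]
   /\ [set a; b; d] = [set b; d; a] /\ [set a; b; d] = [set d; a; b] /\ [set a; b; d] = [set d; b; a].
  move=> a b d; do !split; apply/setP => q; rewrite !inE;
  by case: (q == a); case: (q == b); case: (q == d).
have [s1 [s2 [s3 [s4 s5]]]] := sC x' y' z'.
case=> [[e1 e2 e3]|[e1 e2 e3]|[[e1 e2 e3]|[e1 e2 e3]|[e1 e2 e3]|[e1 e2 e3]]].
- exact: M3.
- rewrite s2; apply: M3; by rewrite ?e1 ?e2 ?e3 // D3C.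
- rewrite s1; apply: M3; by rewrite ?e1 ?e2 ?e3 // D3C.
- rewrite s3; apply: M3; by rewrite ?e1 ?e2 ?e3 // D3C.
- rewrite s4; apply: M3; by rewrite ?e1 ?e2 ?e3 // D3C.
- rewrite s5; apply: M3; by rewrite ?e1 ?e2 ?e3 // D3C.
Qed.

Lemma acute_set3 x y z : 0 < D3 x y z -> 0 < D3 y x z -> 0 < D3 z x y -> acute01 [set x; y; z].
Proof.
move=> hx hy hz.
have /andP [yx zx] := D3_neq hx.
have /andP [xy zy] := D3_neq hy.
rewrite /acute01 /triangle01 card_set3 //=.
apply/forall_inP => u uT; apply/forall_inP => v vT; apply/forall_inP => w wT.
apply/implyP => /and3P [uv wv uw]; rewrite edge_dotE ltz_nat.
move: uT vT wT uv wv uw; rewrite !inE.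
move=> /orP [/orP [] /eqP -> | /eqP ->] /orP [/orP [] /eqP -> | /eqP ->]
        /orP [/orP [] /eqP -> | /eqP ->]; rewrite ?eqxx //= => _ _ _;
  by rewrite ?hx ?hy ?hz // D3C ?hx ?hy ?hz.
Qed.

Lemma acute_inv T : acute01 T -> exists x y z,
  [/\ T = [set x; y; z], 0 < D3 x y z, 0 < D3 y x z & 0 < D3 z x y].
Proof.
move=> /andP [/eqP hc hf].
move: hc; rewrite cardE.
case E: (enum T) => [|x [|y [|z [|? ?]]]] //= _.
have hT : T = [set x; y; z].
  by apply/setP => q; rewrite -mem_enum E !inE orbA.
have xT : x \in T by rewrite hT !inE eqxx.
have yT : y \in T by rewrite hT !inE eqxx orbT.
have zT : z \in T by rewrite hT !inE eqxx orbT.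
have U : uniq [:: x; y; z] by rewrite -E enum_uniq.
move: U; rewrite /= !inE negb_or => /and3P [/andP [xy xz] yz _].
have pos : forall u v w, u \in T -> v \in T -> w \in T -> u != v -> w != v -> u != w ->
    0 < D3 v u w.
  move=> u v w uT vT wT uv wv uw.
  move/forall_inP: hf => /(_ u uT) /forall_inP /(_ v vT) /forall_inP /(_ w wT).
  by rewrite uv wv uw /= edge_dotE ltz_nat.
exists x, y, z; split => //.
- by apply: pos; rewrite // eq_sym.
- by apply: pos; rewrite // eq_sym.
- by apply: pos; rewrite // eq_sym.
Qed.

Definition X0 : pt n := [ffun => false].
Definition X1 a b : pt n := [ffun i : 'I_n => i < a + b].
Definition X2 a b (r : nat) : pt n := [ffun i : 'I_n => (i < a) || ((a + b <= i) && (i < a + b + r))].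

Lemma Can_D3 a b (r : nat) : a + b + r <= n ->
  [/\ D3 X0 (X1 a b) (X2 a b r) = a, D3 (X1 a b) X0 (X2 a b r) = b & D3 (X2 a b r) X0 (X1 a b) = r].
Proof.
move=> h; split.
- rewrite /D3 (eq_bigr (fun i : 'I_n => nat_of_bool ((0 <= i) && (i < a)))); first by rewrite sum_interval; lia.
  move=> i _; rewrite !ffunE /=.
  case: (ltnP i a) => h1; case: (ltnP i (a + b)) => h2; case: (leqP (a + b) i) => h3;
    case: (ltnP i (a + b + r)) => h4 //=; lia.
- rewrite /D3 (eq_bigr (fun i : 'I_n => nat_of_bool ((a <= i) && (i < a + b)))); first by rewrite sum_interval; lia.
  move=> i _; rewrite !ffunE /=.
  case: (ltnP i a) => h1; case: (ltnP i (a + b)) => h2; case: (leqP (a + b) i) => h3;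
    case: (ltnP i (a + b + r)) => h4 //=; lia.
- rewrite /D3 (eq_bigr (fun i : 'I_n => nat_of_bool ((a + b <= i) && (i < a + b + r)))); first by rewrite sum_interval; lia.
  move=> i _; rewrite !ffunE /=.
  case: (ltnP i a) => h1; case: (ltnP i (a + b)) => h2; case: (leqP (a + b) i) => h3;
    case: (ltnP i (a + b + r)) => h4 //=; lia.
Qed.

End Geo.

Section Main.
Variable n : nat.

Definition CanS (t : ('I_n.+1 * 'I_n.+1) * 'I_n.+1) : {set pt n} :=
  [set X0 n; X1 n t.1.1 t.1.2; X2 n t.1.1 t.1.2 t.2].

Definition phi t := borbit (CanS t).

Lemma CanS_prop t : t \in Sset n ->
  [/\ 0 < D3 (X0 n) (X1 n t.1.1 t.1.2) (X2 n t.1.1 t.1.2 t.2),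
      0 < D3 (X1 n t.1.1 t.1.2) (X0 n) (X2 n t.1.1 t.1.2 t.2),
      0 < D3 (X2 n t.1.1 t.1.2 t.2) (X0 n) (X1 n t.1.1 t.1.2) &
      key (CanS t) = [:: (t.1.1 : nat); (t.1.2 : nat); (t.2 : nat)]].
Proof.
rewrite inE => /and4P [h1 h2 h3 h4].
have [e1 e2 e3] := Can_D3 h4.
rewrite e1 e2 e3; split => //; try lia.
have p1 : 0 < D3 (X0 n) (X1 n t.1.1 t.1.2) (X2 n t.1.1 t.1.2 t.2) by rewrite e1.
have p2 : 0 < D3 (X1 n t.1.1 t.1.2) (X0 n) (X2 n t.1.1 t.1.2 t.2) by rewrite e2; lia.
have p3 : 0 < D3 (X2 n t.1.1 t.1.2 t.2) (X0 n) (X1 n t.1.1 t.1.2) by rewrite e3; lia.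
have /andP [yx zx] := D3_neq p1.
have /andP [_ zy] := D3_neq p2.
rewrite /CanS key_set3 // e1 e2 e3.
by apply: sorted_sort; [exact: leq_trans|rewrite /= h2 h3].
Qed.

Lemma CanS_acute t : t \in Sset n -> acute01 (CanS t).
Proof. by move=> /CanS_prop [p1 p2 p3 _]; apply: acute_set3. Qed.

Lemma orbit_of_acute T : acute01 T -> exists2 t, t \in Sset n & borbit T = phi t.
Proof.
move=> /acute_inv [x [y [z [-> hx hy hz]]]].
have /andP [yx zx] := D3_neq hx.
have /andP [_ zy] := D3_neq hy.
have hk := key_set3 yx zx zy.
set L := sort leq _ in hk.
have sL : size L = 3 by rewrite size_sort.
have soL : sorted leq L by apply: sort_sorted; exact: leq_total.
have pL : perm_eq L [:: D3 x y z; D3 y x z; D3 z x y] by rewrite perm_sort.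
have sumL : sumn L <= n.
  rewrite (perm_sumn pL) /= addn0 addnA; exact: D3_sum.
have posL : forall k, k \in L -> 0 < k.
  move=> k; rewrite (perm_mem pL) !inE => /orP [/eqP ->|/orP [] /eqP ->] //.
move: L sL soL pL sumL posL hk => [|a [|b [|c [|? ?]]]] //= _ /and3P [ab bc _] _ sumL posL hk.
have a0 : 0 < a by apply: posL; rewrite mem_head.
exists (inord a, inord b, inord c).
  by rewrite inE /= !inordK; lia.
have ht : (inord a, inord b, inord c) \in Sset n.
  by rewrite inE /= !inordK; lia.
have [p1 p2 p3 kC] := CanS_prop ht.
move: kC; rewrite /= !inordK; try lia.
move=> kC.
rewrite /phi; symmetry; apply: borbit_eq.
move: kC; rewrite /CanS /= => kC.
have /andP [yx' zx'] := D3_neq p1.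
have /andP [_ zy'] := D3_neq p2.
apply: key_orbit => //.
by rewrite hk kC.
Qed.

Lemma orbits_eq : [set borbit T | T in [set T : {set pt n} | acute01 T]] = [set phi t | t in Sset n].
Proof.
apply/setP => O; apply/imsetP/imsetP.
  move=> [T]; rewrite inE => /orbit_of_acute [t ht ->] ->.
  by exists t.
move=> [t ht ->]; exists (CanS t) => //.
by rewrite inE CanS_acute.
Qed.

Lemma phi_inj : {in Sset n &, injective phi}.
Proof.
move=> t1 t2 h1 h2 e.
have : CanS t2 \in borbit (CanS t1) by rewrite -/(phi t1) e borbit_refl.
move/key_borbit.
have [_ _ _ ->] := CanS_prop h1; have [_ _ _ ->] := CanS_prop h2.
case=> ea eb ec.
move: t1 t2 {h1 h2 e} ea eb ec => [[a1 b1] c1] [[a2 b2] c2] /= ea eb ec.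
by congr (_, _, _); apply: val_inj.
Qed.

End Main.

Theorem theorem4p23 (n : nat) : 1 <= n ->
  num_acute_orbits n = (2 * n ^ 3 + 3 * n ^ 2 + 9 - 6 * n) %/ 72.
Proof.
move=> _.
rewrite /num_acute_orbits orbits_eq card_in_imset; last exact: phi_inj.
have h4 := cardS n.
have hm := main_arith n.
have he : ee (n %% 6) < 72.
  have : n %% 6 < 6 by rewrite ltn_mod.
  by case: (n %% 6) => [|[|[|[|[|[|?]]]]]].
have -> : 2 * n ^ 3 + 3 * n ^ 2 + 9 - 6 * n = #|Sset n| * 72 + ee (n %% 6) by lia.
by rewrite divnMDl // divn_small // addn0.
Qed.
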